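(* Let $S\ni h$ be a polarized lattice. A subset $\Gamma\subset\operatorname{root}_1(S,h)$ admits a Weyl chamber for $\operatorname{rt}(S,h)$ compatible with $\Gamma$ if and only if there is no separating root $r\in\operatorname{root}_0(S,h)$. In this case, each Weyl chamber $\Delta'$ for the lattice $S':=(\mathbb{Z}h+\mathbb{Z}\Gamma)^\perp\subset S$ is a face of a unique Weyl chamber $\Delta$ for $\operatorname{rt}(S,h)$ compatible with $\Gamma$.
   Context: All lattices are even and nondegenerate; $(S,h)$ polarized means $S$ hyperbolic and $h^2>0$. $\operatorname{root}_n(S,h)=\{r\in S: r^2=-2,\ r\cdot h=n\}$; $\operatorname{rt}(S,h)$ is the root lattice spanned by $\operatorname{root}_0(S,h)$; a Weyl chamber for the root lattice of a negative definite lattice $S'$ is one for the lattice generated by roots of $S'$. A Weyl chamber $\Delta$ is determined by its set of positive roots $P_\Delta$ (closed half of the roots); $\mathfrak{b}(\Delta)$ are its simple roots. $\operatorname{Fn}_\Delta(S,h)=\{l\in\operatorname{root}_1(S,h): l\cdot e\ge0\ \forall e\in\mathfrak{b}(\Delta)\}$. A Weyl chamber $\Delta$ is compatible with $\Gamma$ if $\Gamma\subset\operatorname{Fn}_\Delta(S,h)$. A root $r\in\operatorname{root}_0(S,h)$ is separating (with respect to $\Gamma$) if there are $u,v\in\Gamma$ with $r\cdot u>0$ and $r\cdot v<0$. That $\Delta'$ is a face of $\Delta$ means $P_\Delta\cap S'=P_{\Delta'}$. *)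

(* Defs.v *)
From mathcomp Require Import all_boot all_order all_algebra.
Set Implicit Arguments. Unset Strict Implicit. Unset Printing Implicit Defensive.
Import Order.TTheory GRing.Theory Num.Theory.
Local Open Scope ring_scope.

(* A lattice of rank n is Z^n (row vectors 'rV[int]_n) with the bilinear
   form given by a symmetric Gram matrix G. *)
Definition vec n := 'rV[int]_n.

Definition form n (G : 'M[int]_n) (x y : vec n) : int := (x *m G *m y^T) 0 0.

(* pairing of a lattice vector with a vector of S (x) Q *)
Definition formQ n (G : 'M[int]_n) (x : vec n) (v : 'rV[rat]_n) : rat :=
  (map_mx (fun z : int => z%:~R) x *m map_mx (fun z : int => z%:~R) G *m v^T) 0 0.

Definition symmetric_gram n (G : 'M[int]_n) : Prop := G^T = G.
Definition even_lattice n (G : 'M[int]_n) : Prop :=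
  forall x : vec n, (2 %| form G x x)%Z.
Definition nondegenerate n (G : 'M[int]_n) : Prop := \det G != 0.
(* hyperbolic: signature (1, n-1), i.e. the maximal dimension of a positive
   definite subspace is exactly 1 (together with nondegeneracy).  A rank-2
   sublattice spanned by u, v is positive definite iff u^2 > 0 and its Gram
   determinant u^2 v^2 - (u.v)^2 is > 0. *)
Definition hyperbolic n (G : 'M[int]_n) : Prop :=
  nondegenerate G /\
  (exists x : vec n, 0 < form G x x) /\
  (forall u v : vec n,
      ~ (0 < form G u u /\ 0 < form G u u * form G v v - form G u v ^+ 2)).

Definition even_lattice_form n (G : 'M[int]_n) : Prop :=
  symmetric_gram G /\ even_lattice G /\ nondegenerate G.

Definition polarized n (G : 'M[int]_n) (h : vec n) : Prop :=
  even_lattice_form G /\ hyperbolic G /\ 0 < form G h h.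

Definition vset n := vec n -> Prop.

Definition is_root n (G : 'M[int]_n) (r : vec n) : Prop := form G r r = -2.

Definition root_k n (G : 'M[int]_n) (h : vec n) (k : int) : vset n :=
  fun r => is_root G r /\ form G r h = k.

Definition perp_lattice n (G : 'M[int]_n) (h : vec n) (Gam : vset n) : vset n :=
  fun x => form G x h = 0 /\ forall g, Gam g -> form G x g = 0.

Definition roots_of n (G : 'M[int]_n) (L : vset n) : vset n :=
  fun r => L r /\ is_root G r.

(* A Weyl chamber for the root system R (the set of roots of a negative
   definite lattice), represented by its set P of positive roots:
   P = {r in R | r.v > 0} for some v not orthogonal to any root of R. *)
Definition weyl_chamber n (G : 'M[int]_n) (R P : vset n) : Prop :=
  exists v : 'rV[rat]_n,
    (forall r, R r -> formQ G r v != 0) /\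
    (forall r, P r <-> (R r /\ 0 < formQ G r v)).

Definition simple_roots n (P : vset n) : vset n :=
  fun e => P e /\ ~ (exists a b, P a /\ P b /\ e = a + b).

Definition Fn n (G : 'M[int]_n) (h : vec n) (P : vset n) : vset n :=
  fun l => root_k G h 1 l /\ forall e, simple_roots P e -> 0 <= form G l e.

Definition compatible n (G : 'M[int]_n) (h : vec n) (P Gam : vset n) : Prop :=
  forall l, Gam l -> Fn G h P l.

Definition separating n (G : 'M[int]_n) (h : vec n) (Gam : vset n) (r : vec n) :
  Prop :=
  root_k G h 0 r /\ exists u v, Gam u /\ Gam v /\ 0 < form G r u /\ form G r v < 0.

Definition face n (L : vset n) (P P' : vset n) : Prop :=
  forall r, (P r /\ L r) <-> P' r.

(* Main.v *)
Require Import Defs.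
From mathcomp Require Import all_boot all_order all_algebra.
From mathcomp Require Import zify ring lra.
From Stdlib Require Import Classical.
Require Import Defs.
Set Implicit Arguments. Unset Strict Implicit. Unset Printing Implicit Defensive.
Import Order.TTheory GRing.Theory Num.Theory.
Local Open Scope ring_scope.

Lemma tr00 (R : Type) (A : 'M[R]_1) : A^T 0 0 = A 0 0. Proof. by rewrite mxE. Qed.

Section F.
Variables (n : nat) (G : 'M[int]_n).

Lemma formE (x y : vec n) : form G x y = \sum_j (x *m G) 0 j * y 0 j.
Proof. by rewrite /form mxE; apply: eq_bigr => j _; rewrite [y^T _ _]mxE. Qed.

Lemma formDl x y z : form G (x + y) z = form G x z + form G y z.
Proof. by rewrite /form mulmxDl mulmxDl mxE. Qed.
Lemma formDr x y z : form G z (x + y) = form G z x + form G z y.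
Proof. by rewrite /form linearD /= mulmxDr mxE. Qed.
Lemma formZl (c : int) x z : form G (c *: x) z = c * form G x z.
Proof. by rewrite /form -!scalemxAl mxE. Qed.
Lemma formZr (c : int) x z : form G z (c *: x) = c * form G z x.
Proof. by rewrite /form linearZ /= -!scalemxAr mxE. Qed.
Lemma formNl x z : form G (- x) z = - form G x z.
Proof. by rewrite -scaleN1r formZl mulN1r. Qed.
Lemma formNr x z : form G z (- x) = - form G z x.
Proof. by rewrite -scaleN1r formZr mulN1r. Qed.
Lemma form0r z : form G z 0 = 0.
Proof. by rewrite /form trmx0 mulmx0 mxE. Qed.
Lemma form_sum z (s : seq (vec n)) : form G z (\sum_(l <- s) l) = \sum_(l <- s) form G z l.
Proof.
elim: s => [|a s IH]; first by rewrite !big_nil form0r.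
by rewrite !big_cons formDr IH.
Qed.

Lemma form_sym : symmetric_gram G -> forall x y, form G x y = form G y x.
Proof.
move=> sG x y; rewrite /form -[in RHS]tr00.
by rewrite !trmx_mul trmxK sG mulmxA.
Qed.

Lemma form_delta x (i : 'I_n) : form G x (delta_mx 0 i) = (x *m G) 0 i.
Proof.
rewrite formE (bigD1 i) //= big1 ?addr0; first by rewrite [delta_mx _ _ _ _]mxE !eqxx mulr1.
by move=> j /negbTE ji; rewrite [delta_mx _ _ _ _]mxE ji andbF mulr0.
Qed.

Definition toQ (x : vec n) : 'rV[rat]_n := map_mx (fun z : int => z%:~R) x.

Lemma formQ_int x y : formQ G x (toQ y) = (form G x y)%:~R.
Proof.
rewrite /formQ /form /toQ map_trmx -!map_mxM mxE //.
Qed.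
Lemma formQDr x (v w : 'rV[rat]_n) : formQ G x (v + w) = formQ G x v + formQ G x w.
Proof. by rewrite /formQ linearD /= mulmxDr mxE. Qed.
Lemma formQZr x (c : rat) (v : 'rV[rat]_n) : formQ G x (c *: v) = c * formQ G x v.
Proof. by rewrite /formQ linearZ /= -!scalemxAr mxE. Qed.

End F.
Lemma den_clear n (v : 'rV[rat]_n) :
  exists D : int, 0 < D /\ exists y : vec n, toQ y = D%:~R *: v.
Proof.
exists (\prod_(j < n) denq (v 0 j)); split.
  by apply: prodr_gt0 => j _; exact: denq_gt0.
exists (\row_j (numq (v 0 j) * \prod_(k < n | k != j) denq (v 0 k))).
apply/matrixP => i j; rewrite !mxE [in RHS](bigD1 j) //= !intrM numqE.
rewrite [i]ord1; ring.
Qed.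

Lemma root_bound n (G : 'M[int]_n) h : polarized G h ->
  forall x : vec n, exists B : int, forall r, root_k G h 0 r -> `|form G r x| <= B.
Proof.
move=> [[sG _] [[_ [_ hyp]] Hpos]] x.
exists (2 * ((form G h x) ^+ 2 - form G h h * form G x x)) => r [rr rh].
set c := form G r x.
have := hyp h (c *: r + 2 *: x).
rewrite !(formDl, formDr, formZl, formZr) rr (form_sym sG x r) (form_sym sG h r) rh -/c.
set H := form G h h in Hpos *; set hx := form G h x; set xx := form G x x.
move=> NH.
have key : forall E : int, ~ (0 < H /\ 0 < E) -> E <= 0.
  by move=> E NE; rewrite leNgt; apply/negP => P; exact: NE (conj Hpos P).
have := key _ NH => {NH key} NH.
have H1 : H * (c * c) <= 2 * (hx ^+ 2 - H * xx) by nia.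
nia.
Qed.

Lemma pos_equiv n (G : 'M[int]_n) (v : 'rV[rat]_n) (D : int) (y : vec n) :
  0 < D -> toQ y = D%:~R *: v -> forall r, (0 < formQ G r v) <-> (0 < form G r y).
Proof.
move=> D0 Ey r.
have E : (form G r y)%:~R = D%:~R * formQ G r v :> rat by rewrite -formQ_int Ey formQZr.
have D0' : 0 < D%:~R :> rat by rewrite ltr0z.
split => H.
  by rewrite -(ltr0z rat) E mulr_gt0.
by move: H; rewrite -(ltr0z rat) E pmulr_rgt0.
Qed.

Lemma pos_sum n (G : 'M[int]_n) h (P : vset n) (v : 'rV[rat]_n)
  (HP : forall r, P r <-> root_k G h 0 r /\ 0 < formQ G r v) (l : vec n) :
  (forall e, simple_roots P e -> 0 <= form G l e) -> forall r, P r -> 0 <= form G l r.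
Proof.
move=> Hs.
have [D [D0 [y Ey]]] := den_clear v.
have PE := pos_equiv G D0 Ey.
have Pp : forall r, P r -> 0 < form G r y by move=> r /HP [_ /PE].
suff K : forall k : nat, forall r, P r -> form G r y <= k%:Z -> 0 <= form G l r.
  move=> r Pr; apply: (K `|form G r y|%N r Pr); lia.
elim=> [|k IH] r Pr Hk.
  have := Pp r Pr; lia.
case: (classic (exists a b, P a /\ P b /\ r = a + b)) => [[a [b [Pa [Pb Er]]]]|ND].
  move: Hk; rewrite Er formDr formDl => Hk.
  have := Pp a Pa; have := Pp b Pb => Ha Hb.
  have := IH a Pa ltac:(lia); have := IH b Pb ltac:(lia); lia.
by apply: Hs; split.
Qed.

Fixpoint span n (s : seq (vec n)) : 'M[rat]_n :=
  match s with [::] => 0 | l :: s => (toQ l + span s)%MS end.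

Lemma span_exists n (Gam : vset n) : exists s : seq (vec n),
  (forall l, l \in s -> Gam l) /\ forall g, Gam g -> (toQ g <= span s)%MS.
Proof.
apply: NNPP => N.
suff K : forall k : nat, exists s : seq (vec n), (forall l, l \in s -> Gam l) /\ (k <= \rank (span s))%N.
  have [s [_ Hs]] := K n.+1.
  by move: (rank_leq_col (span s)); rewrite leqNgt Hs.
elim=> [|k [s [Hs Hk]]]; first by exists [::]; split.
have [g Hg] : exists g, ~ (Gam g -> (toQ g <= span s)%MS).
  apply: not_all_ex_not => H; apply: N; exists s; split => //.
have [Gg ng] := imply_to_and _ _ Hg.
exists (g :: s); split.
  by move=> l; rewrite inE => /orP [/eqP ->|/Hs].
have : (span s < span (g :: s))%MS.
  rewrite /= ltmxE addsmxSr /= addsmx_sub submx_refl andbT.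
  by apply/negP.
rewrite ltmxErank => /andP [_ Hr]; exact: leq_ltn_trans Hk Hr.
Qed.

Lemma span_orth n (G : 'M[int]_n) (s : seq (vec n)) (r : vec n) :
  (forall l, l \in s -> form G l r = 0) ->
  forall g, (toQ g <= span s)%MS -> form G g r = 0.
Proof.
move=> Hs g Hg.
set c := map_mx (fun z : int => z%:~R) G *m (toQ r)^T.
have E : forall x, (toQ x *m c) 0 0 = (form G x r)%:~R.
  by move=> x; rewrite /c mulmxA -formQ_int.
have Ks : (span s <= kermx c)%MS.
  elim: s Hs {Hg} => [|a s IH] Hs /=; first exact: sub0mx.
  rewrite addsmx_sub IH ?andbT; last by move=> l ls; apply: Hs; rewrite inE ls orbT.
  rewrite sub_kermx; apply/eqP/matrixP => i j; rewrite [i]ord1 [j]ord1 E Hs ?inE ?eqxx //.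
  by rewrite mxE.
have := submx_trans Hg Ks; rewrite sub_kermx => /eqP /matrixP /(_ 0 0).
by rewrite E mxE => /eqP; rewrite intr_eq0 => /eqP.
Qed.

Lemma generic n (G : 'M[int]_n) h : polarized G h ->
  exists vg : vec n, forall r, root_k G h 0 r -> form G r vg != 0.
Proof.
move=> pol.
suff K : forall k, (k <= n)%N -> exists v : vec n, forall r, root_k G h 0 r ->
    form G r v = 0 -> forall i : 'I_n, (i < k)%N -> form G r (delta_mx 0 i) = 0.
  have [v Hv] := K n (leqnn n); exists v => r Rr; apply/eqP => E.
  have Z := Hv r Rr E.
  have : form G r r = 0.
    rewrite formE big1 // => j _; rewrite -form_delta Z ?mul0r //.
  by case: Rr => -> _.
elim=> [|k IH] kn; first by exists 0 => r _ _ i.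
have [v Hv] := IH (ltnW kn).
have [B HB] := root_bound pol (delta_mx 0 (Ordinal kn)).
exists ((B + 1) *: v + delta_mx 0 (Ordinal kn)) => r Rr.
rewrite formDr formZr => E.
have HBr := HB r Rr.
have F0 : form G r v = 0.
  apply/eqP; apply: contraT => /negP NZ.
  have : form G r v != 0 by apply/negP.
  move: HBr E; set f := form G r v; set e := form G r _; move=> HBr E NZ'.
  exfalso; move: NZ'; rewrite /f; nia.
have E0 : form G r (delta_mx 0 (Ordinal kn)) = 0 by move: E; rewrite F0 mulr0 add0r.
move=> i; rewrite ltnS leq_eqVlt => /orP [/eqP ik|ik]; last exact: Hv.
by have -> : i = Ordinal kn by apply: val_inj.
Qed.

Lemma formQNl n (G : 'M[int]_n) x (v : 'rV[rat]_n) : formQ G (- x) v = - formQ G x v.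
Proof. by rewrite /formQ map_mxN !mulNmx mxE. Qed.

Lemma root_boundQ n (G : 'M[int]_n) h : polarized G h ->
  forall v : 'rV[rat]_n, exists B : int, 0 <= B /\ forall r, root_k G h 0 r ->
    - B%:~R <= formQ G r v <= B%:~R.
Proof.
move=> pol v.
have [D [D0 [y Ey]]] := den_clear v.
have [B HB] := root_bound pol y.
exists `|B|; split => // r Rr.
have E : (form G r y)%:~R = D%:~R * formQ G r v :> rat by rewrite -formQ_int Ey formQZr.
have := HB r Rr => Hr.
have H1 : - `|B|%:~R <= (form G r y)%:~R :> rat by rewrite -mulrNz ler_int; lia.
have H2 : (form G r y)%:~R <= `|B|%:~R :> rat by rewrite ler_int; lia.
have D1 : 1 <= D%:~R :> rat by rewrite ler1z; lia.
have B0 : 0 <= `|B|%:~R :> rat by rewrite ler0z.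
rewrite E in H1 H2.
set q := formQ G r v in H1 H2 *; set d := D%:~R in H1 H2 D1 *.
have d1 : 0 <= d - 1 by lra.
case: (lerP 0 q) => q0.
  have := mulr_ge0 d1 q0 => P; apply/andP; split; nra.
have q0' : 0 <= - q by lra.
have := mulr_ge0 d1 q0' => P; apply/andP; split; nra.
Qed.

Lemma sum_ge_one (T : eqType) (F : T -> int) (s : seq T) (l : T) :
  (forall x, x \in s -> 0 <= F x) -> l \in s -> F l <= \sum_(x <- s) F x.
Proof.
elim: s => [|a s IH] //= Hs; rewrite inE big_cons => /orP [/eqP ->|ls].
  have : 0 <= \sum_(x <- s) F x.
    elim: s {IH} Hs => [|b s IH'] Hs; first by rewrite big_nil.
    rewrite big_cons; apply: addr_ge0; first by apply: Hs; rewrite !inE eqxx orbT.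
    by apply: IH' => x xs; apply: Hs; move: xs; rewrite !inE => /orP [->|->]; rewrite ?orbT.
  by move=> H; rewrite lerDl.
have := IH (fun x xs => Hs x (@mem_behead _ (a :: s) x xs)) ls.
have := Hs a (mem_head a s) => Ha Hl; apply: (le_trans Hl); by rewrite lerDr.
Qed.

Lemma neg_root n (G : 'M[int]_n) h r : root_k G h 0 r -> root_k G h 0 (- r).
Proof.
by case=> rr rh; split; rewrite /is_root ?formNl ?formNr ?opprK ?rh ?oppr0.
Qed.

Lemma ch_neg n (G : 'M[int]_n) h (P : vset n) (v : 'rV[rat]_n) :
  (forall r, root_k G h 0 r -> formQ G r v != 0) ->
  (forall r, P r <-> (root_k G h 0 r /\ 0 < formQ G r v)) ->
  forall r, root_k G h 0 r -> ~ P r -> P (- r).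
Proof.
move=> Hnz HP r Rr NP; apply/HP; split; first exact: neg_root.
rewrite formQNl oppr_gt0; have := Hnz r Rr.
rewrite neq_lt => /orP [//|pos]; exfalso; apply: NP; apply/HP; split => //.
Qed.

Lemma dir1 n (G : 'M[int]_n) h (Gam : vset n) (P : vset n) :
  symmetric_gram G -> weyl_chamber G (root_k G h 0) P -> compatible G h P Gam ->
  ~ (exists r, separating G h Gam r).
Proof.
move=> sG [v [Hnz HP]] Hc [r [Rr [u [w [Gu [Gw [ru rw]]]]]]].
case: (classic (P r)) => Pr.
  have := pos_sum HP (proj2 (Hc w Gw)) Pr; rewrite form_sym //; lia.
have := pos_sum HP (proj2 (Hc u Gu)) (ch_neg Hnz HP Rr Pr).
rewrite formNr form_sym //; lia.
Qed.

Lemma uniq_ch n (G : 'M[int]_n) h (Gam : vset n) (P' P1 P2 : vset n) :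
  symmetric_gram G ->
  weyl_chamber G (root_k G h 0) P1 /\ compatible G h P1 Gam /\
    face (perp_lattice G h Gam) P1 P' ->
  weyl_chamber G (root_k G h 0) P2 /\ compatible G h P2 Gam /\
    face (perp_lattice G h Gam) P2 P' ->
  forall r, P1 r -> P2 r.
Proof.
move=> sG [[v1 [Hnz1 HP1]] [Hc1 F1]] [[v2 [Hnz2 HP2]] [Hc2 F2]] r P1r.
have [Rr _] := proj1 (HP1 r) P1r.
case: (classic (perp_lattice G h Gam r)) => Sr.
  exact: (proj1 (proj2 (F2 r) (proj1 (F1 r) (conj P1r Sr)))).
have [g [Gg ng]] : exists g, Gam g /\ form G r g <> 0.
  apply: NNPP => N; apply: Sr; split; first by case: Rr.
  move=> g Gg; apply: NNPP => ng; apply: N; exists g; split.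
    exact: Gg.
  exact: ng.
have := pos_sum HP1 (proj2 (Hc1 g Gg)) P1r; rewrite form_sym // => pos.
apply: NNPP => NP2.
have := pos_sum HP2 (proj2 (Hc2 g Gg)) (ch_neg Hnz2 HP2 Rr NP2).
rewrite formNr form_sym //.
move: ng pos; set f := form G r g => ng pos neg.
apply: ng; lia.
Qed.

Lemma exist_ch n (G : 'M[int]_n) h (Gam P' : vset n) :
  polarized G h -> (forall l, Gam l -> root_k G h 1 l) ->
  ~ (exists r, separating G h Gam r) ->
  weyl_chamber G (roots_of G (perp_lattice G h Gam)) P' ->
  exists P, weyl_chamber G (root_k G h 0) P /\ compatible G h P Gam /\
            face (perp_lattice G h Gam) P P'.
Proof.
move=> pol H1 Nsep [v' [Hnz' HP']].
have sG : symmetric_gram G by case: pol => [[]].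
have [s [sG' sspan]] := span_exists Gam.
set w := \sum_(l <- s) l.
have [B [B0 HB]] := root_boundQ pol v'.
set M : rat := (B + 1)%:~R.
set v := v' + M *: toQ w.
have EQv : forall r, formQ G r v = formQ G r v' + M * (form G r w)%:~R.
  by move=> r; rewrite /v formQDr formQZr formQ_int.
have orthS : forall r, perp_lattice G h Gam r -> formQ G r v = formQ G r v'.
  move=> r [_ Sr]; rewrite EQv /w form_sum big1_seq ?mulr0 ?addr0 //.
  by move=> l /andP [_ ls]; apply: Sr; apply: sG'.
have orth : forall r, root_k G h 0 r -> (forall l, l \in s -> form G l r = 0) ->
    perp_lattice G h Gam r.
  move=> r [_ rh] Hs; split => // g Gg.
  by rewrite form_sym //; apply: (span_orth Hs); apply: sspan.
have sign : forall r, root_k G h 0 r -> (exists l, l \in s /\ form G r l <> 0) ->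
    (0 < formQ G r v /\ forall g, Gam g -> 0 <= form G r g) \/
    (formQ G r v < 0 /\ forall g, Gam g -> form G r g <= 0).
  move=> r Rr [l [ls nl]].
  have /andP [Bl Bu] := HB r Rr.
  have M0 : 0 <= M by rewrite /M ler0z; lia.
  case: (ltrgtP (form G r l) 0) => [neg|pos|z]; last by exfalso; apply: nl.
    have allneg : forall g, Gam g -> form G r g <= 0.
      move=> g Gg; apply: NNPP => ng; apply: Nsep; exists r; split => //.
      exists g, l; split => //; split; first exact: sG'.
      by split => //; rewrite ltNge; apply/negP.
    right; split => //.
    have : - form G r l <= \sum_(x <- s) - form G r x.
      apply: (sum_ge_one (F := fun x => - form G r x)) => // x xs.
      by rewrite oppr_ge0; apply: allneg; apply: sG'.
    rewrite sumrN -form_sum -/w => Hw.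
    have Hw1 : (form G r w)%:~R <= -1 :> rat.
      have : 1 <= (- form G r w)%:~R :> rat by rewrite ler1z; lia.
      rewrite rmorphN /=; lra.
    have := mulr_ge0 M0 (_ : 0 <= -1 - (form G r w)%:~R) => P.
    rewrite EQv; have := P ltac:(lra); rewrite /M intrD; lra.
  have allpos : forall g, Gam g -> 0 <= form G r g.
    move=> g Gg; apply: NNPP => ng; apply: Nsep; exists r; split => //.
    exists l, g; split; first exact: sG'; split => //; split => //.
    by rewrite ltNge; apply/negP.
  left; split => //.
  have : form G r l <= \sum_(x <- s) form G r x.
    apply: (sum_ge_one (F := fun x => form G r x)) => // x xs.
    by apply: allpos; apply: sG'.
  rewrite -form_sum -/w => Hw.
  have Hw1 : 1 <= (form G r w)%:~R :> rat by rewrite ler1z; lia.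
  have := mulr_ge0 M0 (_ : 0 <= (form G r w)%:~R - 1) => P.
  rewrite EQv; have := P ltac:(lra); rewrite /M intrD; lra.
exists (fun r => root_k G h 0 r /\ 0 < formQ G r v); split; last split.
- exists v; split => // r Rr.
  case: (classic (forall l, l \in s -> form G l r = 0)) => Ho.
    have Sr := orth r Rr Ho; rewrite orthS //; apply: Hnz'; split => //; by case: Rr.
  have : exists l, l \in s /\ form G r l <> 0.
    apply: NNPP => N; apply: Ho => l ls; apply: NNPP => nl; apply: N; exists l.
    by rewrite form_sym.
  by case/(sign r Rr) => [[p _]|[p _]]; [rewrite gt_eqF | rewrite lt_eqF].
- move=> g Gg; split; first exact: H1.
  move=> e [[Re pe] _]; rewrite form_sym //.
  case: (classic (forall l, l \in s -> form G l e = 0)) => Ho.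
    by have [_ Se] := orth e Re Ho; rewrite Se.
  have : exists l, l \in s /\ form G e l <> 0.
    apply: NNPP => N; apply: Ho => l ls; apply: NNPP => nl; apply: N; exists l.
    by rewrite form_sym.
  case/(sign e Re) => [[_ p]|[p _]]; first exact: p.
  by exfalso; move: pe; rewrite ltNge le_eqVlt p orbT.
- move=> r; split.
    move=> [[Rr pos] Sr]; apply/HP'; split; first by split => //; case: Rr.
    by rewrite -orthS.
  move=> /HP' [[Sr isr] pos]; split => //; split; first by split => //; case: Sr.
  by rewrite orthS.
Qed.

Theorem lemma2p4 (n : nat) (G : 'M[int]_n) (h : vec n) (Gam : vset n) :
  polarized G h ->
  (forall l, Gam l -> root_k G h 1 l) ->
  ((exists P, weyl_chamber G (root_k G h 0) P /\ compatible G h P Gam)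
     <-> ~ (exists r, separating G h Gam r)) /\
  (~ (exists r, separating G h Gam r) ->
   forall P' : vset n,
     weyl_chamber G (roots_of G (perp_lattice G h Gam)) P' ->
     (exists P, weyl_chamber G (root_k G h 0) P /\ compatible G h P Gam /\
                face (perp_lattice G h Gam) P P') /\
     (forall P1 P2,
        weyl_chamber G (root_k G h 0) P1 /\ compatible G h P1 Gam /\
          face (perp_lattice G h Gam) P1 P' ->
        weyl_chamber G (root_k G h 0) P2 /\ compatible G h P2 Gam /\
          face (perp_lattice G h Gam) P2 P' ->
        forall r, P1 r <-> P2 r)).
Proof.
move=> pol H1.
have sG : symmetric_gram G by case: pol => [[]].
split.
  split; first by move=> [P [ch comp]]; exact: dir1 ch comp.
  move=> Nsep.
  have [vg Hvg] := generic pol.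
  have ch' : weyl_chamber G (roots_of G (perp_lattice G h Gam))
      (fun r => roots_of G (perp_lattice G h Gam) r /\ 0 < formQ G r (toQ vg)).
    exists (toQ vg); split => // r [[rh _] isr].
    by rewrite formQ_int intr_eq0; apply: Hvg.
  have [P [ch [comp _]]] := exist_ch pol H1 Nsep ch'.
  by exists P.
move=> Nsep P' ch'; split; first exact: exist_ch.
move=> P1 P2 A1 A2 r; split; [exact: (uniq_ch sG A1 A2) | exact: (uniq_ch sG A2 A1)].
Qed.
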